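(* Consider problem (P) in the setting $\mathbb Y=\mathbb R^m$, $m=m_1+m_2$, $C=\mathbb R^{m_1}_-\times\{0\}^{m_2}$ (no assumption on $D$). Let $\bar w\in\mathbb W$ be a feasible point of (P) at which RCPLD holds. Then $\bar w$ is AM-regular.
   Context: Standing setting: $\mathbb W,\mathbb Y$ are Euclidean spaces; problem (P) is $\min_w f(w)$ s.t. $G(w)\in C$, $w\in D$, where $f\colon\mathbb W\to\mathbb R$ and $G\colon\mathbb W\to\mathbb Y$ are continuously differentiable, $C\subset\mathbb Y$ is nonempty, closed, convex, and $D\subset\mathbb W$ is nonempty and closed. $G'(w)^*$ denotes the adjoint of the derivative. For a closed set $D$, $\Pi_D(x)$ is the (possibly multivalued) Euclidean projection onto $D$, and the limiting normal cone at $\bar w\in D$ is $\mathcal N^{\lim}_D(\bar w):=\limsup_{w\to\bar w}\operatorname{cone}(w-\Pi_D(w))$ (outer/Painlevé–Kuratowski limit), with $\mathcal N^{\lim}_D(w)=\varnothing$ for $w\notin D$. $\mathcal N_C$ is the normal cone of convex analysis ($\varnothing$ outside $C$). A feasible $\bar w$ is AM-regular if $\limsup_{w\to\bar w,\,z\to0}\mathcal M(w,z)\subset\mathcal M(\bar w,0)$, where $\mathcal M(w,z):=G'(w)^*\mathcal N_C(G(w)-z)+\mathcal N^{\lim}_D(w)$. In the present setting $G=(G_1,\dots,G_m)$, $I(\bar w):=\{i\in\{1,\dots,m_1\}: G_i(\bar w)=0\}$, $J:=\{m_1+1,\dots,m\}$. RCPLD holds at feasible $\bar w$ if: (i) the family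 $(\nabla G_i(w))_{i\in J}$ has constant rank for all $w$ in a neighborhood of $\bar w$; (ii) there is $S\subset J$ such that $(\nabla G_i(\bar w))_{i\in S}$ is a basis of $\operatorname{span}\{\nabla G_i(\bar w): i\in J\}$; (iii) for each $I\subset I(\bar w)$, each choice of multipliers $\lambda_i\ge0$ ($i\in I$), $\lambda_i\in\mathbb R$ ($i\in S$), not all zero, and each $\eta\in\mathcal N^{\lim}_D(\bar w)$ with $0=\sum_{i\in I\cup S}\lambda_i\nabla G_i(\bar w)+\eta$, there are neighborhoods $U$ of $\bar w$ and $V$ of $\eta$ such that for all $w\in U$ and $\tilde\eta\in\mathcal N^{\lim}_D(w)\cap V$ the vectors $(\nabla G_i(w))_{i\in I\cup S},\tilde\eta$ (if $\tilde\eta\ne0$), resp. $(\nabla G_i(w))_{i\in I\cup S}$ (if $\tilde\eta=0$), are linearly dependent. *)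

(* Defs.v *)
(* Euclidean spaces are modelled as row vectors 'rV[R]_n with the Euclidean
   inner product [dotv] below (the topology of 'rV is the product topology,
   which is the Euclidean one). *)
From HB Require Import structures.
From mathcomp Require Import all_boot all_order all_algebra.
From mathcomp Require Import all_classical all_reals all_analysis.
Set Implicit Arguments. Unset Strict Implicit. Unset Printing Implicit Defensive.
Import Order.TTheory GRing.Theory Num.Theory.
Import numFieldNormedType.Exports.
Local Open Scope classical_set_scope.
Local Open Scope ring_scope.

Section Defs.
Variable R : realType.

Definition dotv k (u v : 'rV[R]_k) : R := \sum_(j < k) u 0 j * v 0 j.

Definition proj_set n (D : set 'rV[R]_n) (x : 'rV[R]_n) : set 'rV[R]_n :=
  [set p | D p /\ forall y, D y -> dotv (x - p) (x - p) <= dotv (x - y) (x - y)].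

Definition prox_cone n (D : set 'rV[R]_n) (w : 'rV[R]_n) : set 'rV[R]_n :=
  [set v | exists t : R, exists p, 0 <= t /\ proj_set D w p /\ v = t *: (w - p)].

Definition outer_limit a b (S : 'rV[R]_a -> set 'rV[R]_b) (xbar : 'rV[R]_a)
  : set 'rV[R]_b :=
  [set v | exists (x : nat -> 'rV[R]_a) (u : nat -> 'rV[R]_b),
     x @ \oo --> xbar /\ u @ \oo --> v /\ forall k, S (x k) (u k)].

Definition lim_normal_cone n (D : set 'rV[R]_n) (wbar : 'rV[R]_n) : set 'rV[R]_n :=
  [set v | D wbar /\ outer_limit (prox_cone D) wbar v].

Definition conv_normal_cone m (C : set 'rV[R]_m) (y : 'rV[R]_m) : set 'rV[R]_m :=
  [set l | C y /\ forall c, C c -> dotv l (c - y) <= 0].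

Definition C_set m1 m2 : set 'rV[R]_(m1 + m2) :=
  [set y : 'rV[R]_(m1 + m2) | forall i : 'I_(m1 + m2),
     (if (i < m1)%N then y 0 i <= 0 else y 0 i == 0)].

(* Pointwise multiplier map M(w,z) = G'(w)^* N_C(G(w)-z) + N^lim_D(w),
   where G'(w)^* l = sum_i l_i grad G_i(w). *)
Definition M_map n m (C : set 'rV[R]_m) (D : set 'rV[R]_n)
  (G : 'rV[R]_n -> 'rV[R]_m) (dG : 'I_m -> 'rV[R]_n -> 'rV[R]_n)
  (w : 'rV[R]_n) (z : 'rV[R]_m) : set 'rV[R]_n :=
  [set v | exists l eta, conv_normal_cone C (G w - z) l /\
      lim_normal_cone D w eta /\ v = \sum_(i < m) l 0 i *: dG i w + eta].

(* AM-regularity: limsup_{w->wbar, z->0} M(w,z) is contained in M(wbar,0) *)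
Definition AM_regular n m (C : set 'rV[R]_m) (D : set 'rV[R]_n)
  (G : 'rV[R]_n -> 'rV[R]_m) (dG : 'I_m -> 'rV[R]_n -> 'rV[R]_n)
  (wbar : 'rV[R]_n) : Prop :=
  forall v, (exists (w : nat -> 'rV[R]_n) (z : nat -> 'rV[R]_m)
                    (u : nat -> 'rV[R]_n),
               w @ \oo --> wbar /\ z @ \oo --> (0 : 'rV[R]_m) /\ u @ \oo --> v /\
               forall k, M_map C D G dG (w k) (z k) (u k)) ->
            M_map C D G dG wbar 0 v.

Definition lin_indep_on n m (A : {set 'I_m}) (f : 'I_m -> 'rV[R]_n) : Prop :=
  forall c : 'I_m -> R, \sum_(i in A) c i *: f i = 0 -> forall i, i \in A -> c i = 0.

Definition fam_rank n m (A : {set 'I_m}) (f : 'I_m -> 'rV[R]_n) : nat :=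
  \rank (\matrix_(i < m) (if i \in A then f i else 0)).

Definition basis_of_span n m (S J : {set 'I_m}) (f : 'I_m -> 'rV[R]_n) : Prop :=
  S \subset J /\ lin_indep_on S f /\
  forall j, j \in J -> exists c : 'I_m -> R, f j = \sum_(i in S) c i *: f i.

Definition RCPLD n m1 m2 (D : set 'rV[R]_n)
  (G : 'rV[R]_n -> 'rV[R]_(m1 + m2))
  (dG : 'I_(m1 + m2) -> 'rV[R]_n -> 'rV[R]_n) (wbar : 'rV[R]_n) : Prop :=
  let J : {set 'I_(m1 + m2)} := finset (fun i : 'I_(m1 + m2) => (m1 <= i)%N) in
  let Iact : {set 'I_(m1 + m2)} := finset (fun i : 'I_(m1 + m2) => (i < m1)%N && (G wbar 0 i == 0)) in
  (\forall w \near wbar, fam_rank J (dG^~ w) = fam_rank J (dG^~ wbar)) /\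
  exists S : {set 'I_(m1 + m2)},
    basis_of_span S J (dG^~ wbar) /\
    forall (I : {set 'I_(m1 + m2)}) (lam : 'I_(m1 + m2) -> R) (eta : 'rV[R]_n),
      I \subset Iact ->
      (forall i, i \in I -> 0 <= lam i) ->
      (exists i, i \in I :|: S /\ lam i != 0) ->
      lim_normal_cone D wbar eta ->
      0 = \sum_(i in I :|: S) lam i *: dG i wbar + eta ->
      exists U V, nbhs wbar U /\ nbhs eta V /\
        forall w teta, U w -> lim_normal_cone D w teta -> V teta ->
          if teta != 0 then
            exists (mu : 'I_(m1 + m2) -> R) (nu : R),
              ((exists i, i \in I :|: S /\ mu i != 0) \/ nu != 0) /\
              \sum_(i in I :|: S) mu i *: dG i w + nu *: teta = 0
          else
            exists mu : 'I_(m1 + m2) -> R,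
              (exists i, i \in I :|: S /\ mu i != 0) /\
              \sum_(i in I :|: S) mu i *: dG i w = 0.

Definition C1_with_gradients n m (G : 'rV[R]_n -> 'rV[R]_m)
  (dG : 'I_m -> 'rV[R]_n -> 'rV[R]_n) : Prop :=
  forall i : 'I_m,
    (forall w, differentiable (fun x => G x 0 i) w /\
       forall h, 'd (fun x => G x 0 i) w h = dotv (dG i w) h) /\
    continuous (dG i).

End Defs.

(* Main.v *)
Require Import Defs.
From HB Require Import structures.
From mathcomp Require Import all_boot all_order all_algebra.
From mathcomp Require Import all_classical all_reals all_analysis.
From mathcomp Require Import ring lra zify.
Import Order.TTheory GRing.Theory Num.Theory.
Import numFieldNormedType.Exports.
Local Open Scope classical_set_scope.
Local Open Scope ring_scope.
Set Implicit Arguments. Unset Strict Implicit. Unset Printing Implicit Defensive.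

Definition sincr (f : nat -> nat) := forall k, (f k < f k.+1)%N.

Lemma sincr_ge f : sincr f -> forall k, (k <= f k)%N.
Proof. by move=> hf; elim=> // k IH; apply: leq_ltn_trans IH (hf k). Qed.

Lemma sincr_mono f : sincr f -> forall a b, (a <= b)%N -> (f a <= f b)%N.
Proof.
move=> hf a b /subnK <-; elim: (b - a)%N => // c IH.
by rewrite addSn; apply: leq_trans IH (ltnW (hf _)).
Qed.

Lemma sincr_comp f g : sincr f -> sincr g -> sincr (f \o g).
Proof.
move=> hf hg k /=; exact: leq_trans (hf (g k)) (sincr_mono hf (hg k)).
Qed.

Lemma sincr_shift K : sincr (fun k => (k + K)%N).
Proof. by move=> k; rewrite addSn. Qed.

Lemma near_sub (P : nat -> Prop) f : sincr f ->
  (\forall k \near \oo, P k) -> \forall k \near \oo, P (f k).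
Proof.
move=> hf [N _ HN]; exists N => // k /= Nk; apply: HN => /=.
exact: leq_trans Nk (sincr_ge hf k).
Qed.

Lemma cvg_sub {T : topologicalType} (x : nat -> T) (L : T) f : sincr f ->
  x @ \oo --> L -> (fun k => x (f k)) @ \oo --> L.
Proof.
move=> hf hx A HA; have := hx A HA; rewrite /= /nbhs /=.
exact: (near_sub (P := fun k => A (x k))).
Qed.

Lemma extract (P : nat -> nat -> Prop) :
  (forall j K, exists k, (K <= k)%N /\ P j k) ->
  exists f, sincr f /\ forall j, P j (f j).
Proof.
move=> H.
have [pick Hp] : exists pick : nat -> nat -> nat, forall j K,
    (K <= pick j K)%N /\ P j (pick j K).
  have [g Hg] := @choice _ _ (fun (jK : nat * nat) k => (jK.2 <= k)%N /\ P jK.1 k)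
    (fun jK => H jK.1 jK.2).
  by exists (fun j K => g (j, K)) => j K; apply: (Hg (j, K)).
pose f := fix f k := if k is k'.+1 then pick k (f k').+1 else pick 0%N 0%N.
exists f; split; first by move=> k /=; case: (Hp k.+1 (f k).+1).
by case=> [|j] /=; [case: (Hp 0%N 0%N) | case: (Hp j.+1 (f j).+1)].
Qed.

Lemma eventually_not (P : nat -> Prop) :
  ~ (\forall k \near \oo, P k) -> forall K, exists k, (K <= k)%N /\ ~ P k.
Proof.
move=> nP K; apply: contrapT => H; apply: nP; exists K => // k /= Kk.
by apply: contrapT => nPk; apply: H; exists k.
Qed.

Section R.
Variable R : realType.

Lemma cvg_ball_seq {V : normedModType R} (y : nat -> V) L :
  (forall j, `|L - y j| < j.+1%:R^-1) -> y @ \oo --> L.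
Proof.
move=> H; apply/cvgrPdist_lt => e e0.
have [N _ HN] := nbhs_infty_ger (e^-1).
exists N => // j /= Nj; apply: lt_le_trans (H j) _.
rewrite -[e]invrK lef_pV2 ?posrE ?invr_gt0 ?ltr0n //.
by apply: le_trans (HN j Nj) _; rewrite ler_nat.
Qed.

Lemma bounded_subseq p (x : nat -> 'rV[R]_p) (M : R) :
  (forall k, `|x k| <= M) ->
  exists f (L : 'rV[R]_p), sincr f /\ (fun k => x (f k)) @ \oo --> L.
Proof.
move=> hM.
pose A := [set y : 'rV[R]_p | `|y| <= M].
have cA : compact A.
  apply: bounded_closed_compact.
    exists M; split; first by rewrite num_real.
    by move=> r Mr y /= Ay; apply: le_trans Ay (ltW Mr).
  apply: (preimage_closed (f := fun y : 'rV[R]_p => `|y|) (D := [set r | r <= M])).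
    by move=> y _; apply: norm_continuous.
  exact: closed_le.
have FA : (x @ \oo) A by exists 0%N => // k _; exact: hM.
have [L [AL cl]] := cA (x @ \oo) _ FA.
have [f [hf Hf]] : exists f, sincr f /\ forall j, `|L - x (f j)| < j.+1%:R^-1.
  apply: (@extract (fun j k => `|L - x k| < j.+1%:R^-1)) => j K.
  have H1 : (x @ \oo) (x @` [set k | (K <= k)%N]).
    by exists K => // k /= Kk; exists k.
  have H2 : nbhs L (ball L j.+1%:R^-1).
    by apply: nbhsx_ballx; rewrite invr_gt0 ltr0n.
  have [_ [[k Kk <-] Bk]] := cl _ _ H1 H2.
  exists k; split => //.
  by move: Bk; rewrite -ball_normE.
exists f, L; split => //; exact: cvg_ball_seq.
Qed.
End R.

Lemma fin_const_subseq (T : finType) (x : nat -> T) :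
  exists f c, sincr f /\ forall k, x (f k) = c.
Proof.
suff [c Hc] : exists c, forall K, exists k, (K <= k)%N /\ x k = c.
  have [f [hf Hf]] := @extract (fun _ k => x k = c) (fun _ => Hc).
  by exists f, c.
apply: contrapT => H.
have H' : forall c, exists K, forall k, (K <= k)%N -> x k != c.
  move=> c; apply: contrapT => H1; apply: H; exists c => K.
  apply: contrapT => H2; apply: H1; exists K => k Kk; apply/eqP => xk.
  by apply: H2; exists k.
have [Kf HK] := choice H'.
pose K := (\max_(c : T) Kf c)%N.
have := HK (x K) K; rewrite eqxx => /(_ _) H3.
by have := H3 (leq_bigmax (x K)).
Qed.

Section R.
Variable R : realType.

Lemma coord_le_norm p q (A : 'M[R]_(p, q)) i j : `|A i j| <= `|A|.
Proof.
rewrite [leRHS]/Num.norm /= mx_normrE.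
by apply/bigmax_geP; right; exists (i, j).
Qed.

Lemma norm_le_coord p q (A : 'M[R]_(p, q)) (M : R) :
  0 <= M -> (forall i j, `|A i j| <= M) -> `|A| <= M.
Proof.
move=> M0 H; rewrite [leLHS]/Num.norm /= mx_normrE.
by apply: bigmax_le => // -[i j] _; apply: H.
Qed.

Lemma cvg_coord p q (x : nat -> 'M[R]_(p, q)) (L : 'M[R]_(p, q)) i j :
  x @ \oo --> L -> (fun k => x k i j) @ \oo --> L i j.
Proof.
move=> /cvgrPdist_lt H; apply/cvgrPdist_lt => e e0.
near=> k; have := coord_le_norm (L - x k) i j; rewrite !mxE => /le_lt_trans; apply.
by near: k; apply: H.
Unshelve. all: by end_near. Qed.

Lemma cvg_lincomb N n (c : nat -> 'rV[R]_N) (cL : 'rV[R]_N)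
    (g : 'I_N -> nat -> 'rV[R]_n) (gL : 'I_N -> 'rV[R]_n) :
  c @ \oo --> cL -> (forall i, g i @ \oo --> gL i) ->
  (fun k => \sum_i c k 0 i *: g i k) @ \oo -->
     \sum_i cL 0 i *: gL i.
Proof.
move=> hc hg.
apply: (@cvg_big _ _ +%R 0 xpredT add_continuous _ \oo _
   (fun i k => c k 0 i *: g i k) (fun i => cL 0 i *: gL i)) => // i _. apply: cvgZ; last exact: hg.
exact: cvg_coord.
Qed.

End R.

Lemma cvg_cont_seq {V W : topologicalType} {h : V -> W} {x : nat -> V} {a : V} :
  continuous h -> x @ \oo --> a -> (fun k => h (x k)) @ \oo --> h a.
Proof. by move=> hc hx; apply: cvg_comp hx (hc a). Qed.

Section C.
Variable R : realType.

Lemma inv_small (e : R) : 0 < e -> \forall k \near \oo, k.+1%:R^-1 < e.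
Proof.
move=> e0; have [N _ HN] := nbhs_infty_ger (e^-1 + 1).
exists N => // k /= Nk.
rewrite -[e]invrK ltf_pV2 ?posrE ?invr_gt0 ?ltr0n //.
have h1 : e^-1 < e^-1 + 1 by rewrite ltrDl.
have h2 : (k%:R : R) <= k.+1%:R by rewrite ler_nat.
exact: lt_le_trans h1 (le_trans (HN k Nk) h2).
Qed.

Lemma cvg_close {V : normedModType R} (y z : nat -> V) (L : V) :
  y @ \oo --> L -> (forall k, `|y k - z k| < k.+1%:R^-1) -> z @ \oo --> L.
Proof.
move=> /cvgrPdist_lt hy hyz; apply/cvgrPdist_lt => e e0.
have e20 : 0 < e / 2 by rewrite divr_gt0.
near=> k.
rewrite -(subrK (y k) L) -addrA.
apply: le_lt_trans (ler_normD _ _) _.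
rewrite [e]splitr; apply: ltrD.
  by near: k; apply: hy.
apply: lt_trans (hyz k) _.
by near: k; apply: inv_small.
Unshelve. all: by end_near. Qed.

Variable n : nat.
Variable D : set 'rV[R]_n.

Lemma lim_normal_coneZ w (th : 'rV[R]_n) t :
  0 <= t -> lim_normal_cone D w th -> lim_normal_cone D w (t *: th).
Proof.
move=> t0 [Dw [x [u [hx [hu hp]]]]]; split => //.
exists x, (fun k => t *: u k); split => //; split.
  by apply: cvgZ => //; exact: cvg_cst.
move=> k; have [s [p [s0 [pp ->]]]] := hp k.
by exists (t * s), p; split; [exact: mulr_ge0 | split => //; rewrite scalerA].
Qed.

Lemma lim_normal_cone_closed (w : nat -> 'rV[R]_n) wbar (th : nat -> 'rV[R]_n) (thL : 'rV[R]_n) :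
  D wbar -> w @ \oo --> wbar -> th @ \oo --> thL ->
  (forall k, lim_normal_cone D (w k) (th k)) -> lim_normal_cone D wbar thL.
Proof.
move=> Dw hw hth H; split => //.
have H' : forall k, exists xu : 'rV[R]_n * 'rV[R]_n,
    [/\ `|w k - xu.1| < k.+1%:R^-1, `|th k - xu.2| < k.+1%:R^-1 &
        prox_cone D xu.1 xu.2].
  move=> k; have [_ [x [u [hx [hu hp]]]]] := H k.
  have ek : 0 < k.+1%:R^-1 :> R by rewrite invr_gt0 ltr0n.
  have [j [h1 h2]] : exists j, `|w k - x j| < k.+1%:R^-1 /\ `|th k - u j| < k.+1%:R^-1.
    move: hx => /cvgrPdist_lt /(_ _ ek) N1; move: hu => /cvgrPdist_lt /(_ _ ek) N2.
    have [j [P1 P2]] := filter_ex (filterI N1 N2).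
    by exists j.
  by exists (x j, u j); split => //=.
have [f Hf] := choice H'.
exists (fun k => (f k).1), (fun k => (f k).2); split; last split.
- apply: (cvg_close hw) => k; by case: (Hf k).
- apply: (cvg_close hth) => k; by case: (Hf k).
- by move=> k; case: (Hf k).
Qed.

End C.

Section NC.
Variables (R : realType) (m1 m2 : nat).
Local Notation N := (m1 + m2)%N.

Lemma dotv_delta (l : 'rV[R]_N) (i : 'I_N) a :
  dotv l (a *: delta_mx 0 i) = a * l 0 i.
Proof.
rewrite /dotv (bigD1 i) //= big1 ?addr0.
  by rewrite !mxE !eqxx mulr1 mulrC.
by move=> j ji; rewrite !mxE (negbTE ji) andbF mulr0 mulr0.
Qed.

Lemma C_set_upd (y : 'rV[R]_N) (i : 'I_N) a :
  C_set y -> (i < m1)%N -> y 0 i + a <= 0 -> C_set (y + a *: delta_mx 0 i).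
Proof.
move=> Cy im ya j; have := Cy j; rewrite !mxE.
case: (eqVneq j i) => [->|ji]; first by rewrite im !eqxx mulr1.
by rewrite andbF mulr0 addr0.
Qed.

Lemma NC_fwd (y l : 'rV[R]_N) :
  conv_normal_cone (@C_set R m1 m2) y l ->
  forall i : 'I_N, (i < m1)%N -> 0 <= l 0 i /\ l 0 i * y 0 i = 0.
Proof.
move=> [Cy H] i im.
have yi : y 0 i <= 0 by have := Cy i; rewrite im.
have key a : y 0 i + a <= 0 -> a * l 0 i <= 0.
  move=> ya; have := H _ (C_set_upd Cy im ya).
  by rewrite addrAC subrr add0r dotv_delta.
have h1 := key (-1) ltac:(lra).
have h2 := key (- y 0 i) ltac:(lra).
have h3 := key (y 0 i) ltac:(lra).
split; first by lra.
nra.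
Qed.

Lemma NC_bwd (y l : 'rV[R]_N) :
  C_set y -> (forall i : 'I_N, (i < m1)%N -> 0 <= l 0 i /\ l 0 i * y 0 i = 0) ->
  conv_normal_cone (@C_set R m1 m2) y l.
Proof.
move=> Cy H; split => // c Cc; rewrite /dotv; apply: sumr_le0 => j _.
rewrite !mxE; have := Cy j; have := Cc j.
case: ifP => jm.
  move=> cj yj; have [h1 h2] := H j jm; nra.
by move=> /eqP -> /eqP ->; rewrite subrr mulr0.
Qed.
End NC.

Section LA.
Variables (R : realType) (n N : nat) (g : 'I_N -> 'rV[R]_n).

Definition Amx (T : {set 'I_N}) : 'M[R]_(N, n) :=
  \matrix_(i < N) (if i \in T then g i else 0).

Lemma Amx_row T i : row i (Amx T) = if i \in T then g i else 0.
Proof. by rewrite rowK. Qed.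

Lemma Amx_mul T (x : 'rV[R]_N) : x *m Amx T = \sum_(i in T) x 0 i *: g i.
Proof.
rewrite mulmx_sum_row [RHS]big_mkcond /=; apply: eq_bigr => i _.
by rewrite Amx_row; case: ifP => _; rewrite ?scaler0.
Qed.

Lemma rank_ker_le m (A B : 'M[R]_(m, n)) :
  (forall x : 'rV[R]_m, x *m A = 0 -> x *m B = 0) -> (\rank B <= \rank A)%N.
Proof.
move=> H.
have sub : (kermx A <= kermx B)%MS.
  apply/sub_kermxP; apply/row_matrixP => i.
  rewrite row_mul row0; apply: H.
  by rewrite -row_mul mulmx_ker row0.
have := mxrankS sub; rewrite !mxrank_ker.
have := rank_leq_row A; have := rank_leq_row B.
lia.
Qed.

Lemma Amx_sub (S J : {set 'I_N}) : S \subset J -> (Amx S <= Amx J)%MS.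
Proof.
move=> SJ; apply/row_subP => i; rewrite Amx_row.
case: ifP => iS; last exact: sub0mx.
by have := row_sub i (Amx J); rewrite Amx_row (fintype.subsetP SJ i iS).
Qed.

Lemma Amx_span (S J : {set 'I_N}) :
  (forall j, j \in J -> exists c : 'I_N -> R, g j = \sum_(i in S) c i *: g i) ->
  (Amx J <= Amx S)%MS.
Proof.
move=> H; apply/row_subP => j; rewrite Amx_row.
case: ifP => jJ; last exact: sub0mx.
have [c ->] := H j jJ; apply: summx_sub => i iS.
by apply: scalemx_sub; have := row_sub i (Amx S); rewrite Amx_row iS.
Qed.

Lemma span_of_sub (S J : {set 'I_N}) : (Amx J <= Amx S)%MS ->
  forall j, j \in J -> exists c : 'I_N -> R, g j = \sum_(i in S) c i *: g i.
Proof.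
move=> /row_subP H j jJ; have := H j; rewrite Amx_row jJ => /submxP [d ->].
by exists (fun i => d 0 i); rewrite Amx_mul.
Qed.

End LA.

Lemma span_transfer (R : realType) (n N : nat) (gw gb : 'I_N -> 'rV[R]_n)
  (S J : {set 'I_N}) :
  S \subset J -> lin_indep_on S gw -> (Amx gb J <= Amx gb S)%MS ->
  \rank (Amx gw J) = \rank (Amx gb J) -> (Amx gw J <= Amx gw S)%MS.
Proof.
move=> SJ ind sb rk.
have h1 := mxrankS sb.
have h2 : (\rank (Amx gb S) <= \rank (Amx gw S))%N.
  apply: rank_ker_le => x; rewrite !Amx_mul => /ind H.
  by apply: big1 => i iS; rewrite H // scale0r.
have [h3 <-] := mxrank_leqif_sup (Amx_sub gw SJ).
apply/eqP; lia.
Qed.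

Section F.
Variable R : realType.

Lemma lim_cst_eq {V : normedModType R} (x : nat -> V) (a L : V) :
  (forall k, x k = a) -> x @ \oo --> L -> L = a.
Proof.
move=> xa /cvgrPdist_lt H; apply/eqP; rewrite -subr_eq0 -normr_le0.
apply/unstable.ler_gtP => e e0; have [k Hk] := filter_ex (H e e0).
by move: Hk; rewrite xa => /ltW.
Qed.

Lemma lim_le_cst (x : nat -> R) (a L : R) :
  (forall k, x k <= a) -> x @ \oo --> L -> L <= a.
Proof.
move=> xa hx; apply: (closed_cvg _ (@closed_le R a) _ _ hx).
by apply: nearW.
Qed.

Lemma lim_ge_cst (x : nat -> R) (a L : R) :
  (forall k, a <= x k) -> x @ \oo --> L -> a <= L.
Proof.
move=> xa hx; apply: (closed_cvg _ (@closed_ge R a) _ _ hx).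
by apply: nearW.
Qed.

Lemma normalize_subseq p (c : nat -> 'rV[R]_p) : (forall k, c k != 0) ->
  exists f (r : 'rV[R]_p), sincr f /\
    (fun k => `|c (f k)|^-1 *: c (f k)) @ \oo --> r /\ `|r| = 1.
Proof.
move=> c0.
have n1 k : `| `|c k|^-1 *: c k| = 1.
  rewrite normrZ normfV normr_id mulVf //.
  by rewrite normr_eq0.
have eq_le_lemma k : `| `|c k|^-1 *: c k| <= 1 by rewrite n1.
have [f [r [hf hr]]] := @bounded_subseq R p (fun k => `|c k|^-1 *: c k) 1
   (fun k => eq_le_lemma k).
exists f, r; split => //; split => //.
apply: (@lim_cst_eq _ (fun k => `| `|c (f k)|^-1 *: c (f k)|)) => //.
exact: cvg_norm.
Qed.

End F.

Section Cara.
Variables (R : realType) (n N : nat) (g : 'I_N -> 'rV[R]_n) (D : set 'rV[R]_n).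
Variables (w u : 'rV[R]_n) (S Iact : {set 'I_N}).

Definition rep (I : {set 'I_N}) (lam : 'rV[R]_N) (th : 'rV[R]_n) :=
  [/\ I \subset Iact, (forall i, i \in I -> 0 <= lam 0 i),
      (forall i, i \notin I :|: S -> lam 0 i = 0), lim_normal_cone D w th &
      u = \sum_i lam 0 i *: g i + th].

Definition meas (I : {set 'I_N}) (th : 'rV[R]_n) := (#|I| + (th != 0%R))%N.

Definition minrep I lam th := rep I lam th /\
  forall I' lam' th', rep I' lam' th' -> (meas I th <= meas I' th')%N.

Lemma sum_IS_mk (I : {set 'I_N}) (mu : 'I_N -> R) :
  \sum_(i in I :|: S) mu i *: g i =
  \sum_i (if i \in I :|: S then mu i else 0) *: g i.
Proof.
rewrite big_mkcond /=; apply: eq_bigr => i _.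
by case: ifP => _; rewrite ?scale0r.
Qed.

Lemma step_pos I lam th (mu : 'I_N -> R) (nu : R) :
  minrep I lam th ->
  \sum_(i in I :|: S) mu i *: g i + nu *: th = 0 ->
  ((exists2 i, i \in I & 0 < mu i) \/ (th != 0 /\ 0 < nu)) -> False.
Proof.
move=> [[sI lam0 lamS thN eu] Hmin] Hdep Hex.
pose d (j : option 'I_N) := if j is Some i then mu i else nu.
pose x (j : option 'I_N) := if j is Some i then lam 0 i else 1.
pose Ac (j : option 'I_N) := if j is Some i then i \in I else th != 0.
pose P := [pred j | Ac j && (0 < d j)].
have [j0 Pj0] : exists j0, P j0.
  case: Hex => [[i iI mui]|[th0 nu0]]; first by exists (Some i); rewrite /= iI.
  by exists None; rewrite /= th0.
have x0 j : Ac j -> 0 <= x j by case: j => [i|] /= H; [exact: lam0 | lra].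
case: (@arg_minP _ R _ j0 P (fun j => x j / d j) Pj0) => js Pjs Hjs.
set t := x js / d js.
move: Pjs; rewrite /= => /andP [Ajs djs].
have t0 : 0 <= t by rewrite /t divr_ge0 // ?(x0 _ Ajs) // ltW.
have xpos j : Ac j -> 0 <= x j - t * d j.
  move=> Aj; have [dj|dj] := leP (d j) 0.
    have := x0 _ Aj; nra.
  have : t <= x j / d j by apply: Hjs; rewrite /= Aj dj.
  rewrite ler_pdivlMr // => h; lra.
have xjs : x js - t * d js = 0 by rewrite /t divfK ?subrr // gt_eqF.
pose m i := if i \in I :|: S then mu i else 0.
pose lam' := \row_i (lam 0 i - t * m i).
pose th' := (1 - t * nu) *: th.
pose I' := [set i in I | 0 < lam' 0 i].
have rep' : rep I' lam' th'.
  split.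
  - by apply: (fintype.subset_trans _ sI); apply/fintype.subsetP => i; rewrite inE => /andP [].
  - by move=> i; rewrite inE => /andP [_ /ltW].
  - move=> i; rewrite !inE negb_or => /andP [H1 H2].
    rewrite mxE /m inE (negbTE H2) orbF.
    case: ifP => iI.
      move: H1; rewrite iI /= -leNgt => H3.
      have H5 : lam 0 i - t * mu i <= 0 by move: H3; rewrite mxE /m inE iI.
      have H4 := xpos (Some i) iI; rewrite /= in H4; lra.
    by rewrite lamS ?inE ?iI ?(negbTE H2) // mulr0 subr0.
  - rewrite /th'; have [th0|thn0] := eqVneq th 0; first by rewrite th0 scaler0 -th0.
    apply: lim_normal_coneZ => //.
    by have := xpos None thn0.
  - rewrite eu.
    have -> : \sum_i lam' 0 i *: g i =
        \sum_i lam 0 i *: g i - t *: \sum_i m i *: g i.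
      rewrite scaler_sumr -sumrB; apply: eq_bigr => i _.
      by rewrite mxE scalerBl scalerA.
    rewrite /m -sum_IS_mk /th' scalerBl scale1r -scalerA.
    have -> : \sum_(i in I :|: S) mu i *: g i = - (nu *: th).
      by apply/eqP; rewrite -addr_eq0 Hdep.
    rewrite scalerA -/t scalerN scalerA opprK -addrA; congr (_ + _).
    by rewrite addrC subrK.
have := Hmin _ _ _ rep'; apply/negP; rewrite -ltnNge /meas.
have sub' : I' \subset I by apply/fintype.subsetP => i; rewrite inE => /andP [].
have cardI : (#|I'| <= #|I|)%N := subset_leq_card sub'.
have thth : ((th' != 0%R) <= (th != 0%R))%N.
  rewrite /th'; have [->|_] := eqVneq th 0; first by rewrite scaler0 eqxx.
  exact: leq_b1.
have [[i Ei]|Ei] : (exists i, js = Some i) \/ js = None.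
  by case: js {Hjs t t0 xpos xjs lam' th' I' rep' sub' cardI thth Ajs djs} => [i|];
    [left; exists i|right].
- rewrite Ei /= in Ajs xjs.
  have lam'i : lam' 0 i = 0 by rewrite mxE /m inE Ajs.
  have pr : I' \proper I.
    apply/properP; split => //; exists i => //.
    by rewrite inE Ajs /= lam'i ltxx.
  have := proper_card pr; move: thth.
  case: (th' != 0%R); case: (th != 0%R) => /=; lia.
- rewrite Ei /= in Ajs xjs.
  have -> : th' = 0 by rewrite /th' xjs scale0r.
  by rewrite eqxx addn0 Ajs addn1 ltnS.
Qed.

Lemma minrep_indep I lam th (mu : 'I_N -> R) (nu : R) :
  lin_indep_on S g -> minrep I lam th ->
  \sum_(i in I :|: S) mu i *: g i + nu *: th = 0 ->
  (forall i, i \in I :|: S -> mu i = 0) /\ nu *: th = 0.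
Proof.
move=> indS Hm Hdep.
have Hpos := step_pos Hm Hdep.
have Hdep' : \sum_(i in I :|: S) (- mu i) *: g i + (- nu) *: th = 0.
  suff -> : \sum_(i in I :|: S) (- mu i) *: g i + (- nu) *: th =
    - (\sum_(i in I :|: S) mu i *: g i + nu *: th) by rewrite Hdep oppr0.
  rewrite opprD -sumrN scaleNr; congr (_ + _).
  by apply: eq_bigr => i _; rewrite scaleNr.
have Hneg := step_pos Hm Hdep'.
have muI : forall i, i \in I -> mu i = 0.
  move=> i iI; case: (ltrgtP (mu i) 0) => // h; exfalso.
    by apply: Hneg; left; exists i; rewrite // oppr_gt0.
  by apply: Hpos; left; exists i.
have nuth : nu *: th = 0.
  have [->|thn0] := eqVneq th 0; first by rewrite scaler0.
  case: (ltrgtP nu 0) => h; last by rewrite h scale0r.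
    by exfalso; apply: Hneg; right; rewrite oppr_gt0.
  by exfalso; apply: Hpos; right.
split => //.
have HS : \sum_(i in S) mu i *: g i = 0.
  have HIS : \sum_(i in I :|: S) mu i *: g i = 0 by move: Hdep; rewrite nuth addr0.
  rewrite -[RHS]HIS.
  rewrite big_mkcond [RHS]big_mkcond /=; apply: eq_bigr => i _.
  rewrite inE; case: ifP => iS; first by rewrite orbT.
  by rewrite orbF; case: ifP => // iI; rewrite muI // scale0r.
move=> i; rewrite inE => /orP [iI|iS]; first exact: muI.
exact: indS HS i iS.
Qed.

Lemma minrep_exists I lam th : rep I lam th ->
  exists I' lam' th', minrep I' lam' th'.
Proof.
move=> hr; move: (leqnn (meas I th)); move: {2}(meas I th) => m.
elim: m I lam th hr => [|m IH] I lam th hr hm.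
  exists I, lam, th; split => // I' lam' th' _.
  by apply: leq_trans hm _.
have [H|H] := pselect (minrep I lam th); first by exists I, lam, th.
have [I' [lam' [th' [hr' hlt]]]] : exists I' lam' th', rep I' lam' th' /\
    (meas I' th' < meas I th)%N.
  apply: contrapT => H1; apply: H; split => // I' lam' th' hr'.
  rewrite leqNgt; apply/negP => hlt; apply: H1.
  by exists I', lam', th'.
apply: (IH I' lam' th' hr').
by rewrite -ltnS (leq_trans hlt hm).
Qed.

End Cara.

Section H.
Variables (R : realType) (n N : nat).

Lemma lim_coord_zero (x : nat -> 'rV[R]_N) (r : 'rV[R]_N) i :
  x @ \oo --> r -> (forall k, x k 0 i = 0) -> r 0 i = 0.
Proof. by move=> hx h0; apply: (lim_cst_eq h0); exact: cvg_coord. Qed.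

Lemma lim_coord_ge0 (x : nat -> 'rV[R]_N) (r : 'rV[R]_N) i :
  x @ \oo --> r -> (forall k, 0 <= x k 0 i) -> 0 <= r 0 i.
Proof. by move=> hx h0; apply: (lim_ge_cst h0); exact: cvg_coord. Qed.

Lemma norm1_nz (r : 'rV[R]_N) : `|r| = 1 -> exists i, r 0 i != 0.
Proof.
move=> r1; apply: contrapT => H.
have r0 : r = 0.
  apply/rowP => i; rewrite mxE; apply/eqP; apply: contrapT => /negP Hi.
  by apply: H; exists i.
by move: r1; rewrite r0 normr0 => /eqP; rewrite eq_sym oner_eq0.
Qed.

Lemma sum_full_set (r : 'I_N -> R) (g : 'I_N -> 'rV[R]_n) (T : {set 'I_N}) :
  (forall i, i \notin T -> r i = 0) ->
  \sum_i r i *: g i = \sum_(i in T) r i *: g i.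
Proof.
move=> H; rewrite [RHS]big_mkcond /=; apply: eq_bigr => i _.
by case: ifPn => // /H ->; rewrite scale0r.
Qed.

Lemma indep_eventually (g : 'I_N -> 'rV[R]_n -> 'rV[R]_n) (S : {set 'I_N})
    (wbar : 'rV[R]_n) (w : nat -> 'rV[R]_n) :
  (forall i, continuous (g i)) -> w @ \oo --> wbar ->
  lin_indep_on S (fun i => g i wbar) ->
  \forall k \near \oo, lin_indep_on S (fun i => g i (w k)).
Proof.
move=> gc hw indS; apply: contrapT => /eventually_not H.
have [f [hf Hf]] := @extract (fun _ k => ~ lin_indep_on S (fun i => g i (w k)))
  (fun _ => H).
have H2 : forall j, exists c : 'I_N -> R,
    \sum_(i in S) c i *: g i (w (f j)) = 0 /\ exists2 i, i \in S & c i != 0.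
  move=> j; have := Hf j; rewrite /lin_indep_on => H3; apply: contrapT => H4.
  apply: H3 => c Hc i iS; apply/eqP; apply: contrapT => /negP ci.
  by apply: H4; exists c; split => //; exists i.
have [cf Hcf] := choice H2.
pose cv j : 'rV[R]_N := \row_i (if i \in S then cf j i else 0).
have cv0 j : cv j != 0.
  have [_ [i iS ci]] := Hcf j; apply/negP => /eqP h.
  by move: ci; have := congr1 (fun M : 'rV[R]_N => M 0 i) h;
     rewrite !mxE iS => ->; rewrite eqxx.
have [f2 [r [hf2 [hr r1]]]] := normalize_subseq cv0.
have hw2 : (fun k => w (f (f2 k))) @ \oo --> wbar.
  exact: (cvg_sub (sincr_comp hf hf2)).
have lim := @cvg_lincomb R N n _ r (fun i k => g i (w (f (f2 k))))
  (fun i => g i wbar) hr (fun i => cvg_comp _ _ hw2 (gc i wbar)).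
have zero : forall k, \sum_(i < N | true) (`|cv (f2 k)|^-1 *: cv (f2 k)) 0 i
      *: g i (w (f (f2 k))) = 0.
  move=> k; have [Hs _] := Hcf (f2 k).
  rewrite (@sum_full_set _ (fun i => g i (w (f (f2 k)))) S).
    rewrite (eq_bigr (fun i => `|cv (f2 k)|^-1 *: (cf (f2 k) i *: g i (w (f (f2 k)))))).
      by rewrite -scaler_sumr Hs scaler0.
    by move=> i iS; rewrite !mxE iS scalerA.
  by move=> i iS; rewrite !mxE (negbTE iS) mulr0.
have rS : forall i, i \notin S -> r 0 i = 0.
  move=> i iS; apply: (lim_coord_zero hr) => k.
  by rewrite !mxE (negbTE iS) mulr0.
have : \sum_(i < N | true) r 0 i *: g i wbar = 0.
  by apply: (lim_cst_eq zero).
rewrite (@sum_full_set _ (fun i => g i wbar) S) // => /indS Hz.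
have [i ri] := norm1_nz r1.
have iS : i \in S by apply: contraNT ri => /rS ->.
by move: ri; rewrite (Hz i iS) eqxx.
Qed.

End H.

Section Core.
Variables (R : realType) (n m1 m2 : nat) (D : set 'rV[R]_n).
Variables (G : 'rV[R]_n -> 'rV[R]_(m1 + m2)) (dG : 'I_(m1 + m2) -> 'rV[R]_n -> 'rV[R]_n).
Variables (wbar : 'rV[R]_n) (S Iact : {set 'I_(m1 + m2)}).
Hypothesis gc : forall i, continuous (dG i).
Hypothesis Dw : D wbar.
Hypothesis Cw : @C_set R m1 m2 (G wbar).
Hypothesis SJ : forall i, i \in S -> (m1 <= i)%N.
Hypothesis IactP : forall i, i \in Iact -> (i < m1)%N /\ G wbar 0 i = 0.
Hypothesis hiii :
    forall (I : {set 'I_(m1 + m2)}) (lam : 'I_(m1 + m2) -> R) (eta : 'rV[R]_n),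
      I \subset Iact ->
      (forall i, i \in I -> 0 <= lam i) ->
      (exists i, i \in I :|: S /\ lam i != 0) ->
      lim_normal_cone D wbar eta ->
      0 = \sum_(i in I :|: S) lam i *: dG i wbar + eta ->
      exists U V, nbhs wbar U /\ nbhs eta V /\
        forall w teta, U w -> lim_normal_cone D w teta -> V teta ->
          if teta != 0 then
            exists (mu : 'I_(m1 + m2) -> R) (nu : R),
              ((exists i, i \in I :|: S /\ mu i != 0) \/ nu != 0) /\
              \sum_(i in I :|: S) mu i *: dG i w + nu *: teta = 0
          else
            exists mu : 'I_(m1 + m2) -> R,
              (exists i, i \in I :|: S /\ mu i != 0) /\
              \sum_(i in I :|: S) mu i *: dG i w = 0.

Local Notation N := (m1 + m2)%N.

Lemma core (w u : nat -> 'rV[R]_n) (v : 'rV[R]_n) :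
  w @ \oo --> wbar -> u @ \oo --> v ->
  (forall k, lin_indep_on S (fun i => dG i (w k))) ->
  (forall k, exists I lam th,
     rep (fun i => dG i (w k)) D (w k) (u k) S Iact I lam th) ->
  M_map (@C_set R m1 m2) D G dG wbar 0 v.
Proof.
move=> hw hu hind hrep.
have [T HT] : exists T : nat -> {set 'I_N} * 'rV[R]_N * 'rV[R]_n, forall k,
    minrep (fun i => dG i (w k)) D (w k) (u k) S Iact (T k).1.1 (T k).1.2 (T k).2.
  have H0 : forall k, exists t : {set 'I_N} * 'rV[R]_N * 'rV[R]_n,
    minrep (fun i => dG i (w k)) D (w k) (u k) S Iact t.1.1 t.1.2 t.2.
    move=> k; have [I [lam [th hr]]] := hrep k.
    have [I' [lam' [th' hm]]] := minrep_exists hr.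
    by exists (I', lam', th').
  by have [T0 HT0] := choice H0; exists T0.
pose If k := (T k).1.1. pose lamf k := (T k).1.2. pose thf k := (T k).2.
have Hm : forall k, minrep (fun i => dG i (w k)) D (w k) (u k) S Iact
    (If k) (lamf k) (thf k) by exact: HT.
have Hr k := (Hm k).1.
have sIf k : If k \subset Iact by case: (Hr k).
have lam0 k i : i \in If k -> 0 <= lamf k 0 i by case: (Hr k) => _ h _ _ _; exact: h.
have lamS k i : i \notin If k :|: S -> lamf k 0 i = 0 by case: (Hr k) => _ _ h _ _; exact: h.
have thN k : lim_normal_cone D (w k) (thf k) by case: (Hr k).
have eu k : thf k = u k - \sum_i lamf k 0 i *: dG i (w k).
  by case: (Hr k) => _ _ _ _ ->; rewrite [_ + thf k]addrC addrK.
have iS_m1 (i : 'I_N) : (i < m1)%N -> i \notin S.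
  by move=> im; apply/negP => /SJ; rewrite leqNgt im.
have lam_ge0 k (i : 'I_N) : (i < m1)%N -> 0 <= lamf k 0 i.
  move=> im; case: (boolP (i \in If k)) => iI; first exact: lam0.
  by rewrite lamS // inE negb_or iI iS_m1.
have lam_inact k (i : 'I_N) : (i < m1)%N -> i \notin Iact -> lamf k 0 i = 0.
  move=> im iA; apply: lamS; rewrite inE negb_or iS_m1 // andbT.
  by apply: contra iA => /(fintype.subsetP (sIf k)).
have [[M hM]|unb] := pselect (exists M, forall k, `|lamf k| <= M).
  have [f [L [hf hL]]] := bounded_subseq hM.
  pose thL := v - \sum_i L 0 i *: dG i wbar.
  have hwf := cvg_sub hf hw; have huf := cvg_sub hf hu.
  have hth : (fun k => thf (f k)) @ \oo --> thL.
    have -> : (fun k => thf (f k)) =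
        (fun k => u (f k) - \sum_(i < N | true) lamf (f k) 0 i *: dG i (w (f k))).
      by apply/funext => k; rewrite eu.
    apply: cvgB; first exact: huf.
    have h1 := (@cvg_lincomb R N n (fun k => lamf (f k)) L (fun i k => dG i (w (f k))) (fun i => dG i wbar)
      hL (fun i => cvg_cont_seq (@gc i) hwf)). exact h1.
  have thLN : lim_normal_cone D wbar thL.
    exact: (lim_normal_cone_closed Dw hwf hth (fun k => thN (f k))).
  exists L, thL; split; last split => //.
    rewrite subr0; apply: NC_bwd => // i im; split.
      by apply: (lim_coord_ge0 hL) => k; apply: lam_ge0.
    case: (boolP (i \in Iact)) => iA; first by rewrite (IactP iA).2 mulr0.
    by rewrite (lim_coord_zero hL (fun k => lam_inact (f k) i im iA)) mul0r.
  by rewrite /thL addrC subrK.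
have H1 : forall j K, exists k, (K <= k)%N /\ j.+2%:R <= `|lamf k|.
  move=> j K; apply: contrapT => H; apply: unb.
  exists (j.+2%:R + \sum_(k < K) `|lamf k|) => k.
  have s0 : 0 <= \sum_(k < K) `|lamf k| by apply: sumr_ge0 => i _; exact: normr_ge0.
  case: (leqP K k) => hk.
    have : ~ (j.+2%:R <= `|lamf k|) by move=> h; apply: H; exists k.
    move/negP; rewrite -ltNge => h; apply: ltW; apply: lt_le_trans h _.
    by rewrite lerDl.
  apply: le_trans (_ : \sum_(k < K) `|lamf k| <= _); last by rewrite lerDr.
  rewrite (bigD1 (Ordinal hk)) //= lerDl; apply: sumr_ge0 => i _; exact: normr_ge0.
have [f1 [hf1 Hf1]] := extract H1.
have [f2 [I0 [hf2 HI0]]] := fin_const_subseq (fun k => If (f1 k)).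
pose f12 k := f1 (f2 k).
have c0 : forall k, lamf (f12 k) != 0.
  move=> k; rewrite -normr_gt0; apply: lt_le_trans (Hf1 (f2 k)).
  by rewrite ltr0n.
have [f3 [r [hf3 [hr r1]]]] := normalize_subseq c0.
pose psi k := f12 (f3 k).
have hpsi : sincr psi by apply: sincr_comp (sincr_comp hf1 hf2) hf3.
pose s k := `|lamf (psi k)|.
have sk : forall k, k.+2%:R <= s k.
  move=> k; apply: le_trans (Hf1 (f2 (f3 k))); rewrite ler_nat ltnS.
  exact: sincr_ge (sincr_comp hf2 hf3) k.
have spos k : 0 < s k by apply: lt_le_trans (sk k); rewrite ltr0n.
have sinv : (fun k => (s k)^-1) @ \oo --> (0 : R).
  apply: (@cvg_close _ _ (fun=> 0) _ 0 (cvg_cst _)) => k.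
  rewrite sub0r normrN ger0_norm ?invr_ge0 ?ltW //.
  apply: le_lt_trans (_ : (s k)^-1 <= k.+2%:R^-1) _.
    by rewrite lef_pV2 ?posrE ?ltr0n.
  by rewrite ltf_pV2 ?posrE ?ltr0n // ltr_nat.
have hwpsi := cvg_sub hpsi hw; have hupsi := cvg_sub hpsi hu.
pose thS := - \sum_i r 0 i *: dG i wbar.
have hth : (fun k => (s k)^-1 *: thf (psi k)) @ \oo --> thS.
  have -> : (fun k => (s k)^-1 *: thf (psi k)) = (fun k => (s k)^-1 *: u (psi k) -
      \sum_i (`|lamf (psi k)|^-1 *: lamf (psi k)) 0 i *: dG i (w (psi k))).
    apply/funext => k; rewrite eu scalerBr scaler_sumr; congr (_ - _).
    by apply: eq_bigr => i _; rewrite mxE scalerA.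
  have := cvgB (cvgZ sinv hupsi) (@cvg_lincomb R N n
    (fun k => `|lamf (psi k)|^-1 *: lamf (psi k)) r
    (fun i k => dG i (w (psi k))) (fun i => dG i wbar)
      hr (fun i => cvg_cont_seq (@gc i) hwpsi)).
  by rewrite scale0r sub0r => h; exact: h.
have thSN : lim_normal_cone D wbar thS.
  apply: (lim_normal_cone_closed Dw hwpsi hth) => k.
  by apply: lim_normal_coneZ; [rewrite invr_ge0 ltW | exact: thN].
have Ipsi k : If (psi k) = I0 by rewrite /psi /f12 HI0.
have rz : forall i, i \notin I0 :|: S -> r 0 i = 0.
  move=> i hi; apply: (lim_coord_zero hr) => k.
  by rewrite mxE lamS ?mulr0 // Ipsi.
have rpos : forall i, i \in I0 -> 0 <= r 0 i.
  move=> i hi; apply: (lim_coord_ge0 hr) => k.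
  by rewrite mxE mulr_ge0 ?invr_ge0 // lam0 // Ipsi.
have rnz : exists i, i \in I0 :|: S /\ r 0 i != 0.
  have [i ri] := norm1_nz r1; exists i; split => //.
  by apply: contraNT ri => /rz ->.
have dep0 : 0 = \sum_(i in I0 :|: S) r 0 i *: dG i wbar + thS.
  by rewrite -(sum_full_set (fun i => dG i wbar) rz) /thS subrr.
have I0sub : I0 \subset Iact by rewrite -(Ipsi 0%N).
have [U [V [hU [hV hUV]]]] := hiii I0sub rpos rnz thSN dep0.
have E1 : \forall k \near \oo, U (w (psi k)) := hwpsi U hU.
have E2 : \forall k \near \oo, V ((s k)^-1 *: thf (psi k)) := hth V hV.
have [k [Uk Vk]] := filter_ex (filterI E1 E2).
have Hmk := Hm (psi k); rewrite Ipsi in Hmk.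
have tN : lim_normal_cone D (w (psi k)) ((s k)^-1 *: thf (psi k)).
  by apply: lim_normal_coneZ; [rewrite invr_ge0 ltW | exact: thN].
have := hUV _ _ Uk tN Vk; case: ifPn => tz.
  move=> [mu [nu [hnt hsum]]].
  rewrite scalerA in hsum.
  have [hmu hnu] := minrep_indep (hind (psi k)) Hmk hsum.
  case: hnt => [[i [hi mui]]|nu0]; first by move: mui; rewrite hmu // eqxx.
  move: hnu tz; rewrite -scalerA => /eqP; rewrite scaler_eq0 (negbTE nu0) /=.
  by move=> /eqP ->; rewrite eqxx.
move=> [mu [[i [hi mui]] hsum]].
have hsum' : \sum_(i in I0 :|: S) mu i *: dG i (w (psi k)) + 0 *: thf (psi k) = 0.
  by rewrite scale0r addr0.
have [hmu _] := minrep_indep (hind (psi k)) Hmk hsum'.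
by move: mui; rewrite hmu // eqxx.
Qed.

End Core.

Unset Implicit Arguments.

Theorem mainTheorem1 (R : realType) (n m1 m2 : nat)
  (D : set 'rV[R]_n) (G : 'rV[R]_n -> 'rV[R]_(m1 + m2))
  (dG : 'I_(m1 + m2) -> 'rV[R]_n -> 'rV[R]_n) (wbar : 'rV[R]_n) :
  D !=set0 -> closed D ->
  C1_with_gradients G dG ->
  @C_set R m1 m2 (G wbar) -> D wbar ->
  RCPLD D G dG wbar ->
  AM_regular (@C_set R m1 m2) D G dG wbar.
Proof.
move=> _ _ hC1 Cw Dw hR v [w [z [u [hw [hz [hu hM]]]]]].
move: hR; rewrite /RCPLD /=.
set J := finset (fun i : 'I_(m1 + m2) => (m1 <= i)%N).
set Iact := finset (fun i : 'I_(m1 + m2) => (i < m1)%N && (G wbar 0 i == 0)).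
move=> [hrank [S [[SJ0 [indS spanS]] hiii]]].
have gc : forall i, continuous (dG i) by move=> i; case: (hC1 i).
have Gc : forall i, {for wbar, continuous (fun x => G x 0 i)}.
  by move=> i; apply: differentiable_continuous; case: (hC1 i) => /(_ wbar) [].
have SJ : forall i, i \in S -> (m1 <= i)%N.
  by move=> i /(fintype.subsetP SJ0); rewrite inE.
have IactP : forall i, i \in Iact -> (i < m1)%N /\ G wbar 0 i = 0.
  by move=> i; rewrite inE => /andP [-> /eqP].
have E1 := indep_eventually gc hw indS.
have E2 : \forall k \near \oo, fam_rank J (dG^~ (w k)) = fam_rank J (dG^~ wbar).
  exact: hw _ hrank.
have E3 : \forall k \near \oo, forall i : 'I_(m1 + m2), (i < m1)%N ->
    G wbar 0 i != 0 -> G (w k) 0 i - z k 0 i < 0.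
  apply: filter_forall => i.
  case: (boolP ((i < m1)%N && (G wbar 0 i != 0))) => [/andP [im Gn]|hh]; last first.
    by apply: nearW => k im Gn; move: hh; rewrite im Gn.
  have Gneg : G wbar 0 i < 0.
    by have := Cw i; rewrite im => Gle; rewrite lt_neqAle Gn Gle.
  have hs : (fun k => G (w k) 0 i - z k 0 i) @ \oo --> G wbar 0 i - 0.
    apply: cvgB; first exact: (cvg_comp _ _ hw (Gc i)).
    by have := @cvg_coord _ _ _ _ _ 0 i hz; rewrite mxE.
  move: hs => /cvgrPdist_lt /(_ (- G wbar 0 i)) H.
  have H' := H ltac:(by rewrite oppr_gt0).
  apply: filterS H' => k hk _ _.
  move: hk; rewrite subr0 => hk.
  have := ler_norm (- (G wbar 0 i - (G (w k) 0 i - z k 0 i))); rewrite normrN.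
  lra.
have [K _ HK] := filterI E1 (filterI E2 E3).
have spanb : (Amx (dG^~ wbar) J <= Amx (dG^~ wbar) S)%MS := Amx_span spanS.
pose w' k := w (k + K)%N. pose u' k := u (k + K)%N.
have hw' : w' @ \oo --> wbar := cvg_sub (sincr_shift K) hw.
have hu' : u' @ \oo --> v := cvg_sub (sincr_shift K) hu.
have HK' k : [/\ lin_indep_on S (dG^~ (w' k)),
    fam_rank J (dG^~ (w' k)) = fam_rank J (dG^~ wbar) &
    forall i : 'I_(m1 + m2), (i < m1)%N ->
      G wbar 0 i != 0 -> G (w' k) 0 i - z (k + K)%N 0 i < 0].
  by have [h1 [h2 h3]] := HK (k + K)%N (leq_addl _ _); split.
apply: (@core R n m1 m2 D G dG wbar S Iact gc Dw Cw SJ IactP hiii w' u' v hw' hu').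
  by move=> k; case: (HK' k).
move=> k; have [hind hrk hneg] := HK' k.
have [l [eta [hl [heta hueq]]]] := hM (k + K)%N.
have spanw := span_of_sub (span_transfer SJ0 hind spanb hrk).
have [cJ HcJ] : exists cJ : 'I_(m1 + m2) -> 'I_(m1 + m2) -> R, forall j, j \in J ->
    dG j (w' k) = \sum_(i in S) cJ j i *: dG i (w' k).
  have H0 : forall j, exists c : 'I_(m1 + m2) -> R, j \in J ->
      dG j (w' k) = \sum_(i in S) c i *: dG i (w' k).
    move=> j; case: (boolP (j \in J)) => jJ; last by exists (fun=> 0).
    by have [c Hc] := spanw j jJ; exists c.
  by have [f Hf] := choice H0; exists f.
pose a i := if i \in Iact then l 0 i else 0.
pose b i := if i \in S then \sum_(j in J) l 0 j * cJ j i else 0.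
pose lam : 'rV[R]_(m1 + m2) := \row_i (a i + b i).
have nf := NC_fwd hl.
exists Iact, lam, eta; split => //.
- move=> i iA; rewrite mxE /a /b iA.
  have [im _] := IactP i iA.
  rewrite (negbTE (_ : i \notin S)) ?addr0; first by case: (nf i im).
  by apply/negP => /SJ; rewrite leqNgt im.
- move=> i; rewrite inE negb_or => /andP [h1 h2].
  by rewrite mxE /a /b (negbTE h1) (negbTE h2) addr0.
- rewrite /u' hueq; congr (_ + _).
  have Ha : \sum_i a i *: dG i (w' k) =
      \sum_(i : 'I_(m1 + m2) | (i < m1)%N) l 0 i *: dG i (w' k).
    rewrite [RHS]big_mkcond /=; apply: eq_bigr => i _ /=; rewrite /a.
    case: ifPn => iA.
      by have [-> _] := IactP i iA.
    case: ifPn => im; last by rewrite scale0r.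
    have Gn : G wbar 0 i != 0.
      by apply: contra iA => Gz; rewrite inE im.
    have hy := hneg i im Gn.
    have [_ hl0] := nf i im; move: hl0; rewrite !mxE => hl0.
    have -> : l 0 i = 0.
      move: hl0 => /eqP; rewrite mulf_eq0 => /orP [/eqP //|/eqP h].
      by move: hy; rewrite /w' h ltxx.
    by rewrite scale0r.
  have Hb : \sum_i b i *: dG i (w' k) =
      \sum_(i : 'I_(m1 + m2) | ~~ (i < m1)%N) l 0 i *: dG i (w' k).
    have -> : \sum_(i : 'I_(m1 + m2) | ~~ (i < m1)%N) l 0 i *: dG i (w' k) =
        \sum_(j in J) l 0 j *: dG j (w' k).
      by apply: eq_bigl => j; rewrite inE -leqNgt.
    rewrite [RHS](eq_bigr (fun j => l 0 j *: \sum_(i in S) cJ j i *: dG i (w' k))); last first.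
      by move=> j jJ; rewrite -HcJ.
    rewrite [LHS](sum_full_set _ (T := S)); last by move=> i iS; rewrite /b (negbTE iS).
    rewrite [LHS](eq_bigr (fun i => \sum_(j in J) (l 0 j * cJ j i) *: dG i (w' k))); last first.
      by move=> i iS; rewrite /b iS scaler_suml.
    rewrite exchange_big /=; apply: eq_bigr => j jJ.
    by rewrite scaler_sumr; apply: eq_bigr => i iS; rewrite scalerA.
  rewrite [LHS](bigID (fun i : 'I_(m1 + m2) => (i < m1)%N)) /= -Ha -Hb -big_split /=.
  by apply: eq_bigr => i _; rewrite mxE scalerDl.
Qed.
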